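(* Let $n\ge 3$ and $0\le k\le n-3$, and let $G$ be a connected graph of order $n$ with exactly $k$ pendent vertices. Then $$SO(G)\le \frac{(n-k-2)(n-k-1)^2}{\sqrt2}+k\sqrt{(n-1)^2+1}+(n-k-1)\sqrt{(n-1)^2+(n-k-1)^2},$$ with equality if and only if $G$ is isomorphic to the graph obtained by attaching $k$ pendent edges to one vertex of the complete graph $K_{n-k}$.
   Context: For a graph $G$, $d_G(w)$ denotes the degree of vertex $w$, and the Sombor index is $SO(G)=\sum_{ab\in E(G)}\sqrt{d_G(a)^2+d_G(b)^2}$. A pendent vertex is a vertex of degree one. $K_m$ denotes the complete graph on $m$ vertices. *)

(* Defs.v *)
From mathcomp Require Import all_boot all_order all_algebra.
Set Implicit Arguments. Unset Strict Implicit. Unset Printing Implicit Defensive.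
Import Order.TTheory GRing.Theory Num.Theory.

Definition simple_graph (n : nat) (e : rel 'I_n) : Prop :=
  symmetric e /\ irreflexive e.

Definition connected_graph (n : nat) (e : rel 'I_n) : Prop :=
  forall x y : 'I_n, connect e x y.

Definition deg (n : nat) (e : rel 'I_n) (x : 'I_n) : nat := #|[set y | e x y]|.

Definition num_pendent (n : nat) (e : rel 'I_n) : nat :=
  #|[set x | deg e x == 1%N]|.

Definition sombor (R : rcfType) (n : nat) (e : rel 'I_n) : R :=
  \sum_(a : 'I_n) \sum_(b : 'I_n | ((a < b)%N && e a b))
     Num.sqrt (((deg e a) ^ 2 + (deg e b) ^ 2)%N%:R).

(* K_{n-k} on vertices 0..n-k-1 with k pendent edges attached to vertex 0;
   the pendent vertices are n-k..n-1. *)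
Definition kite (n k : nat) : rel 'I_n :=
  fun x y => (x != y) &&
    [|| ((x < n - k)%N && (y < n - k)%N),
        ((val x == 0%N) && (n - k <= y)%N) |
        ((val y == 0%N) && (n - k <= x)%N)].

Definition isomorphic (n : nat) (e1 e2 : rel 'I_n) : Prop :=
  exists f : 'I_n -> 'I_n, bijective f /\ forall x y, e1 x y = e2 (f x) (f y).
Arguments kite n k : clear implicits.

(* Main.v *)
Require Import Defs.
From mathcomp Require Import all_boot all_order all_algebra.
From mathcomp Require Import ring lra zify.
Import Order.TTheory GRing.Theory Num.Theory.
Local Open Scope ring_scope.
Set Implicit Arguments. Unset Strict Implicit. Unset Printing Implicit Defensive.
Lemma add_le_sq (R : rcfType) (a b c d : R) : 0 <= a -> 0 <= b -> 0 <= c -> 0 <= d ->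
  (a + b) ^+ 2 <= (c + d) ^+ 2 -> a + b <= c + d.
Proof. move=> *; nra. Qed.

Lemma submod (R : rcfType) (u0 u v0 v : R) : 0 <= u0 -> u0 <= u -> 0 <= v0 -> v0 <= v ->
  Num.sqrt (u^+2 + v^+2) + Num.sqrt (u0^+2 + v0^+2) <=
  Num.sqrt (u^+2 + v0^+2) + Num.sqrt (u0^+2 + v^+2).
Proof.
move=> h1 h2 h3 h4.
have p1 : 0 <= u^+2 + v^+2 by nra.
have p2 : 0 <= u0^+2 + v0^+2 by nra.
have p3 : 0 <= u^+2 + v0^+2 by nra.
have p4 : 0 <= u0^+2 + v^+2 by nra.
apply: add_le_sq; rewrite ?sqrtr_ge0 //.
have m1 := sqrtrM (u0 ^+ 2 + v0 ^+ 2) p1.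
have m2 := sqrtrM (u0 ^+ 2 + v ^+ 2) p3.
have : Num.sqrt ((u ^+ 2 + v ^+ 2) * (u0 ^+ 2 + v0 ^+ 2)) <= Num.sqrt ((u ^+ 2 + v0 ^+ 2) * (u0 ^+ 2 + v ^+ 2)).
  rewrite ler_sqrt; last by nra.
  have e : (u ^+ 2 + v0 ^+ 2) * (u0 ^+ 2 + v ^+ 2) - (u ^+ 2 + v ^+ 2) * (u0 ^+ 2 + v0 ^+ 2) = (u^+2 - u0^+2) * (v^+2 - v0^+2) by ring.
  rewrite -subr_ge0 e; apply: mulr_ge0; rewrite subr_ge0; nra.
rewrite m1 m2 !sqrrD !sqr_sqrtr //.
lra.
Qed.

Lemma convex_sq (R : rcfType) (c p q r s : R) : 0 <= p -> p <= q -> p <= r -> s = q + r - p ->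
  Num.sqrt (q^+2 + c^+2) + Num.sqrt (r^+2 + c^+2) <=
  Num.sqrt (p^+2 + c^+2) + Num.sqrt (s^+2 + c^+2).
Proof.
move=> h1 h2 h3 hs0.
have hs : r <= s by rewrite hs0; lra.
have p1 : forall x : R, 0 <= x^+2 + c^+2 by move=> x; nra.
apply: add_le_sq; rewrite ?sqrtr_ge0 //.
rewrite !sqrrD !sqr_sqrtr //.
rewrite -!sqrtrM //.
set A := Num.sqrt ((q ^+ 2 + c ^+ 2) * (r ^+ 2 + c ^+ 2)).
set B := Num.sqrt ((p ^+ 2 + c ^+ 2) * (s ^+ 2 + c ^+ 2)).
have dge : 0 <= q * r - p * s by rewrite hs0; nra.
have Bge : p * s <= B.
  rewrite /B -(@ger0_norm _ (p * s)); last by nra.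
  rewrite -sqrtr_sqr ler_sqrt; nra.
have hsq : p ^+ 2 + s ^+ 2 - q ^+ 2 - r ^+ 2 = 2 * (q * r - p * s) by rewrite hs0; ring.
have : A <= (q * r - p * s) + B.
  have hA : 0 <= A by rewrite sqrtr_ge0.
  have hB2 : B ^+ 2 = (p ^+ 2 + c ^+ 2) * (s ^+ 2 + c ^+ 2) by rewrite sqr_sqrtr //; nra.
  have hA2 : A ^+ 2 = (q ^+ 2 + c ^+ 2) * (r ^+ 2 + c ^+ 2) by rewrite sqr_sqrtr //; nra.
  have key : A ^+ 2 <= (q * r - p * s + B) ^+ 2.
    rewrite hA2 sqrrD hB2.
    have : c ^+ 2 * (q ^+ 2 + r ^+ 2) <= c ^+ 2 * (p ^+ 2 + s ^+ 2).
      apply: ler_wpM2l; first nra. lra.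
    move=> hc.
    have hdB : (q * r - p * s) * (p * s) <= (q * r - p * s) * B by apply: ler_wpM2l.
    rewrite -mulr_natr.
    have -> : (q * r - p * s) ^+ 2 = (q*r)^+2 - 2 * (q*r-p*s) * (p*s) - (p*s)^+2 by ring.
    have -> : (p ^+ 2 + c ^+ 2) * (s ^+ 2 + c ^+ 2) = (p*s)^+2 + c^+2 * (p^+2+s^+2) + c^+4 by ring.
    have -> : (q ^+ 2 + c ^+ 2) * (r ^+ 2 + c ^+ 2) = (q*r)^+2 + c^+2 * (q^+2+r^+2) + c^+4 by ring.
    lra.
  have hX : 0 <= q * r - p * s + B by nra.
  nra.
move=> hAB.
rewrite !mulr2n; lra.
Qed.

Definition W (R : rcfType) (a b : nat) : R := Num.sqrt ((a ^ 2 + b ^ 2)%N%:R).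
Arguments W R : clear implicits.

Lemma WE (R : rcfType) a b : W R a b = Num.sqrt (a%:R ^+ 2 + b%:R ^+ 2).
Proof. by rewrite /W natrD !natrX. Qed.

Lemma W_ge0 (R : rcfType) a b : 0 <= W R a b.
Proof. exact: sqrtr_ge0. Qed.

Lemma W_sym (R : rcfType) a b : W R a b = W R b a.
Proof. by rewrite /W addnC. Qed.

Lemma W_mono (R : rcfType) a b a' b' : (a <= a')%N -> (b <= b')%N -> W R a b <= W R a' b'.
Proof.
move=> h1 h2; rewrite /W ler_sqrt ?ler0n // ler_nat.
by apply: leq_add; rewrite leq_exp2r.
Qed.

Lemma W_strict (R : rcfType) a b a' : (a < a')%N -> W R a b < W R a' b.
Proof.
move=> h1; rewrite /W ltr_sqrt ?ltr0n; last by rewrite addn_gt0 expn_gt0 (leq_ltn_trans _ h1).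
by rewrite ltr_nat ltn_add2r ltn_exp2r.
Qed.

Definition gg (R : rcfType) (D x : nat) : R := W R (D + x) D - W R D D.
Arguments gg R : clear implicits.

Lemma gg_ge0 (R : rcfType) D x : 0 <= gg R D x.
Proof. by rewrite /gg subr_ge0 W_mono ?leq_addr. Qed.

Lemma gg0 (R : rcfType) D : gg R D 0 = 0.
Proof. by rewrite /gg addn0 subrr. Qed.

Lemma gg_super (R : rcfType) D a b : gg R D a + gg R D b <= gg R D (a + b).
Proof.
rewrite /gg.
have := @convex_sq R D%:R D%:R (D + a)%:R (D + b)%:R (D + (a + b))%:R.
rewrite !WE ler0n !ler_nat !leq_addr => /(_ isT isT isT).
rewrite !natrD => /(_ ltac:(ring)).
rewrite -!natrD; lra.
Qed.

Lemma W_sub (R : rcfType) D s t : W R (D + s) (D + t) <= W R D D + gg R D s + gg R D t.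
Proof.
rewrite /gg.
have := @submod R D%:R (D + s)%:R D%:R (D + t)%:R.
rewrite ler0n !ler_nat !leq_addr => /(_ isT isT isT isT).
rewrite -!WE (W_sym R D (D + t)); lra.
Qed.

Lemma W_sub_eq (R : rcfType) D s t : (s == 0)%N || (t == 0)%N ->
  W R (D + s) (D + t) = W R D D + gg R D s + gg R D t.
Proof.
case/orP=> /eqP ->; rewrite gg0 addn0 /gg.
  by rewrite W_sym; lra.
by lra.
Qed.

Definition phi (R : rcfType) (D x : nat) : R := D%:R * gg R D x + x%:R * W R (D + x) 1.
Arguments phi R : clear implicits.

Lemma phi0 (R : rcfType) D : phi R D 0 = 0.
Proof. by rewrite /phi gg0 mulr0 mul0r addr0. Qed.

Lemma phi_super (R : rcfType) D a b : phi R D a + phi R D b <= phi R D (a + b).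
Proof.
rewrite /phi.
have h1 := gg_super R D a b.
have h2 : D%:R * (gg R D a + gg R D b) <= D%:R * gg R D (a + b) by apply: ler_wpM2l.
have h3 : a%:R * W R (D + a) 1 <= a%:R * W R (D + (a + b)) 1.
  by apply: ler_wpM2l => //; apply: W_mono; rewrite ?leq_add2l ?leq_addr.
have h4 : b%:R * W R (D + b) 1 <= b%:R * W R (D + (a + b)) 1.
  by apply: ler_wpM2l => //; apply: W_mono; rewrite ?leq_add2l ?leq_addl.
rewrite natrD mulrDl; lra.
Qed.

Lemma phi_strict (R : rcfType) D a b : (0 < a)%N -> (0 < b)%N ->
  phi R D a + phi R D b < phi R D (a + b).
Proof.
move=> ha hb; rewrite /phi.
have h1 := gg_super R D a b.
have h2 : D%:R * (gg R D a + gg R D b) <= D%:R * gg R D (a + b) by apply: ler_wpM2l.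
have h3 : a%:R * W R (D + a) 1 < a%:R * W R (D + (a + b)) 1.
  by rewrite ltr_pM2l ?ltr0n //; apply: W_strict; rewrite ltn_add2l -{1}(addn0 a) ltn_add2l.
have h4 : b%:R * W R (D + b) 1 <= b%:R * W R (D + (a + b)) 1.
  by apply: ler_wpM2l => //; apply: W_mono; rewrite ?leq_add2l ?leq_addl.
rewrite natrD mulrDl; lra.
Qed.

Lemma phi_sum (R : rcfType) D (I : finType) (A : pred I) (x : I -> nat) :
  \sum_(i in A) phi R D (x i) <= phi R D (\sum_(i in A) x i)%N.
Proof.
apply: (big_ind2 (fun (u : R) v => u <= phi R D v)).
- by rewrite phi0.
- move=> x1 x2 y1 y2 h1 h2; apply: le_trans (phi_super _ _ _ _); exact: lerD.
- by [].
Qed.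

Lemma phi_sum_strict (R : rcfType) D (I : finType) (A : {set I}) (x : I -> nat) i j :
  i \in A -> j \in A -> i != j -> (0 < x i)%N -> (0 < x j)%N ->
  \sum_(l in A) phi R D (x l) < phi R D (\sum_(l in A) x l)%N.
Proof.
move=> hi hj hij xi xj.
have -> : (\sum_(l in A) x l = x i + (x j + \sum_(l in A | (l != i) && (l != j)) x l))%N.
  rewrite (bigD1 i) //= (bigD1 j) /=; last by rewrite hj eq_sym.
  by congr (_ + (_ + _)); apply: eq_bigl => l; rewrite andbA.
rewrite (bigD1 i) //= (bigD1 j) /=; last by rewrite hj eq_sym.
have -> : \sum_(l | (l \in A) && (l != i) && (l != j)) phi R D (x l) = \sum_(l in A | (l != i) && (l != j)) phi R D (x l).
  by apply: eq_bigl => l; rewrite andbA.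
set S1 := (\sum_(l | _) phi R D (x l)).
set S2 := (\sum_(l | _) x l)%N.
have e1 : S1 <= phi R D S2 by apply: phi_sum.
have e2 := @phi_strict R D _ _ xi xj.
have e3 := phi_super R D (x i + x j) S2.
rewrite addnA; lra.
Qed.

Definition Pset n (e : rel 'I_n) := [set x | deg e x == 1%N].
Definition Qset n (e : rel 'I_n) := ~: Pset e.
Definition Nb n (e : rel 'I_n) x := [set y | e x y].
Definition xp n (e : rel 'I_n) q := #|Nb e q :&: Pset e|.

Lemma card_setI_sum (T : finType) (A B : {set T}) :
  #|A :&: B| = (\sum_(i in B) (i \in A))%N.
Proof.
rewrite -sum1_card (eq_bigl (fun i => (i \in B) && (i \in A))); last first.
  by move=> i; rewrite inE andbC.
by rewrite big_mkcondr; apply: eq_bigr => i _; case: (i \in A).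
Qed.

Lemma deg_split n (e : rel 'I_n) q : deg e q = (#|Nb e q :&: Qset e| + xp e q)%N.
Proof. by rewrite /deg -(cardsID (Qset e)) /xp setDE /Qset setCK. Qed.

Lemma pend_nb n (e : rel 'I_n) : simple_graph e -> connected_graph e -> (3 <= n)%N ->
  forall p, p \in Pset e -> exists h, Nb e p = [set h] /\ h \in Qset e.
Proof.
move=> [sy irr] cg h3 p; rewrite inE => /cards1P [h hN].
exists h; split => //.
rewrite inE; apply/negP; rewrite inE => /cards1P [h' hN'].
have ph : e p h.
  have : h \in Nb e p by rewrite /Nb hN set11.
  by rewrite inE.
have hp : e h p by rewrite sy.
have h'p : h' = p.
  have : p \in Nb e h by rewrite /Nb inE.
  by rewrite /Nb hN' inE => /eqP.
pose S := [set p; h].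
have cl : forall x y, e x y -> x \in S -> y \in S.
  move=> x y exy; rewrite !inE => /orP [] /eqP hx; subst x.
    have : y \in Nb e p by rewrite /Nb inE.
    by rewrite /Nb hN inE => ->; rewrite orbT.
  have : y \in Nb e h by rewrite /Nb inE.
  by rewrite /Nb hN' inE h'p => ->.
have clS : closed e S.
  move=> x y exy; apply/idP/idP; first exact: cl.
  by apply: cl; rewrite sy.
have allS : forall z, z \in S.
  by move=> z; rewrite -(closed_connect clS (cg p z)) !inE eqxx.
have : (#|'I_n| <= #|S|)%N by apply: subset_leq_card; apply/subsetP => z _; exact: allS.
rewrite card_ord cards2 => hh.
have : (n <= 2)%N by apply: leq_trans hh _; case: (p != h).
by rewrite leqNgt (leq_trans _ h3).
Qed.

Lemma sum_xp n (e : rel 'I_n) : simple_graph e -> connected_graph e -> (3 <= n)%N ->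
  (\sum_(q in Qset e) xp e q)%N = #|Pset e|.
Proof.
move=> sg cg h3.
under eq_bigr => q _ do rewrite /xp card_setI_sum.
rewrite exchange_big /= -sum1_card; apply: eq_bigr => p hp.
have [h [hN hQ]] := pend_nb sg cg h3 hp.
have -> : (\sum_(q in Qset e) (p \in Nb e q))%N = (\sum_(q in Qset e) (q \in Nb e p))%N.
  by apply: eq_bigr => q _; rewrite !inE sg.1.
by rewrite -card_setI_sum hN (setIidPl _) ?cards1 // sub1set.
Qed.

Lemma card_Q n (e : rel 'I_n) : #|Qset e| = (n - #|Pset e|)%N.
Proof. have := cardsC (Pset e); rewrite card_ord /Qset; lia. Qed.

Lemma nbQ_le n (e : rel 'I_n) : simple_graph e -> forall a, a \in Qset e ->
  (#|Nb e a :&: Qset e| <= #|Qset e| - 1)%N.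
Proof.
move=> [sy irr] a ha.
rewrite (cardsD1 a (Qset e)) ha add1n subn1 /=.
apply: subset_leq_card; apply/subsetP => b; rewrite !inE => /andP [eab ->].
by rewrite andbT; apply/eqP => ba; subst b; rewrite irr in eab.
Qed.

Lemma PP_nonadj n (e : rel 'I_n) : simple_graph e -> connected_graph e -> (3 <= n)%N ->
  forall p p', p \in Pset e -> p' \in Pset e -> e p p' = false.
Proof.
move=> sg cg h3 p p' hp hp'.
have [h [hN hQ]] := pend_nb sg cg h3 hp.
apply/negP => epp.
have : p' \in Nb e p by rewrite inE.
rewrite hN inE => /eqP eh; subst p'.
by move: hQ; rewrite inE hp'.
Qed.

Lemma deg_P n (e : rel 'I_n) p : p \in Pset e -> deg e p = 1%N.
Proof. by rewrite inE => /eqP. Qed.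

Definition Fw (R : rcfType) n (e : rel 'I_n) a b : R :=
  if e a b then W R (deg e a) (deg e b) else 0.

Lemma Fw_sym (R : rcfType) n (e : rel 'I_n) : simple_graph e -> forall a b, Fw R e a b = Fw R e b a.
Proof. by move=> [sy _] a b; rewrite /Fw sy W_sym. Qed.

Lemma sombor2 (R : rcfType) n (e : rel 'I_n) : simple_graph e ->
  2 * sombor R e = \sum_(a : 'I_n) \sum_(b : 'I_n) Fw R e a b.
Proof.
move=> sg.
have e1 : sombor R e = \sum_(a : 'I_n) \sum_(b : 'I_n) (if (a < b)%N then Fw R e a b else 0).
  by apply: eq_bigr => a _; rewrite big_mkcondr /= big_mkcond.
have e2 : \sum_(a : 'I_n) \sum_(b : 'I_n) Fw R e a b = \sum_(a : 'I_n) \sum_(b : 'I_n) (if (a < b)%N then Fw R e a b else 0)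
     + \sum_(a : 'I_n) \sum_(b : 'I_n) (if (b < a)%N then Fw R e a b else 0).
  rewrite -big_split; apply: eq_bigr => a _; rewrite -big_split; apply: eq_bigr => b _ /=.
  case: ltngtP => h; rewrite ?addr0 ?add0r //.
  have -> : a = b by apply: val_inj.
  by rewrite /Fw sg.2.
have e3 : \sum_(a : 'I_n) \sum_(b : 'I_n) (if (b < a)%N then Fw R e a b else 0) = \sum_(a : 'I_n) \sum_(b : 'I_n) (if (a < b)%N then Fw R e a b else 0).
  rewrite exchange_big; apply: eq_bigr => a _; apply: eq_bigr => b _.
  by rewrite Fw_sym.
by rewrite e2 e3 e1 mulr2n mulrDl mul1r.
Qed.

Lemma splitQP (R : rcfType) n (e : rel 'I_n) (G : 'I_n -> R) :
  \sum_(a : 'I_n) G a = \sum_(a in Qset e) G a + \sum_(a in Pset e) G a.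
Proof.
rewrite (bigID (fun a => a \in Qset e)) /=; congr (_ + _).
by apply: eq_bigl => a; rewrite !inE negbK.
Qed.

Lemma sum_if_card (R : rcfType) (T : finType) (A B : {set T}) (c : R) :
  \sum_(i in B) (if i \in A then c else 0) = c *+ #|A :&: B|.
Proof.
rewrite -big_mkcondr -sumr_const; apply: eq_bigl => i.
by rewrite !inE andbC.
Qed.

Lemma split_sum (R : rcfType) n (e : rel 'I_n) : simple_graph e -> connected_graph e -> (3 <= n)%N ->
  \sum_(a : 'I_n) \sum_(b : 'I_n) Fw R e a b =
  \sum_(a in Qset e) \sum_(b in Qset e) Fw R e a b
  + 2 * \sum_(a in Qset e) (xp e a)%:R * W R (deg e a) 1.
Proof.
move=> sg cg h3.
have cr : forall a, a \in Qset e -> \sum_(b in Pset e) Fw R e a b = (xp e a)%:R * W R (deg e a) 1.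
  move=> a ha.
  rewrite (eq_bigr (fun b => if b \in Nb e a then W R (deg e a) 1 else 0)); last first.
    by move=> b hb; rewrite /Fw /Nb inE (deg_P hb).
  by rewrite sum_if_card /xp mulr_natl.
rewrite (splitQP e).
rewrite (eq_bigr (fun a => \sum_(b in Qset e) Fw R e a b + \sum_(b in Pset e) Fw R e a b)); last first.
  by move=> a _; rewrite (splitQP e).
rewrite big_split /=.
rewrite (eq_bigr (fun a => \sum_(b in Qset e) Fw R e a b + \sum_(b in Pset e) Fw R e a b) (P := fun a => a \in Pset e)); last first.
  by move=> a _; rewrite (splitQP e).
rewrite big_split /=.
have z : \sum_(a in Pset e) \sum_(b in Pset e) Fw R e a b = 0.
  apply: big1 => a ha; apply: big1 => b hb.
  by rewrite /Fw (PP_nonadj sg cg h3 ha hb).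
have c2 : \sum_(a in Pset e) \sum_(b in Qset e) Fw R e a b = \sum_(a in Qset e) \sum_(b in Pset e) Fw R e a b.
  rewrite exchange_big; apply: eq_bigr => a _; apply: eq_bigr => b _.
  by rewrite Fw_sym.
rewrite z c2 addr0 (eq_bigr _ cr) mulr2n mulrDl mul1r; lra.
Qed.
Lemma pair_sum (R : rcfType) (T : finType) (Q : {set T}) (c : R) (g : T -> R) :
  (1 <= #|Q|)%N ->
  \sum_(a in Q) \sum_(b in Q) (if b == a then 0 else c + g a + g b)
  = (#|Q| * (#|Q| - 1))%:R * c + 2 * (#|Q| - 1)%:R * \sum_(a in Q) g a.
Proof.
move=> hm.
set G := \sum_(a in Q) g a.
have inner : forall a, a \in Q ->
   \sum_(b in Q) (if b == a then 0 else c + g a + g b) = (c + g a) * #|Q|%:R + G - (c + g a + g a).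
  move=> a ha.
  have h1 : \sum_(b in Q) (c + g a + g b) = (c + g a) * #|Q|%:R + G.
    by rewrite big_split /= sumr_const mulr_natr.
  rewrite -h1 [in RHS](bigD1 a) //= [in LHS](bigD1 a) //= eqxx add0r.
  have -> : \sum_(i in Q | i != a) (if i == a then 0 else c + g a + g i) = \sum_(i in Q | i != a) (c + g a + g i).
    by apply: eq_bigr => i /andP [_ /negbTE ->].
  by rewrite addrAC subrr add0r.
rewrite (eq_bigr _ inner).
rewrite (eq_bigr (fun a => (c * #|Q|%:R + G - c) + (#|Q|%:R - 2) * g a)); last by move=> a _; ring.
rewrite big_split /= sumr_const -mulr_sumr -/G natrM natrB //.
rewrite -mulr_natr.
ring.
Qed.

Lemma phi_sum_eq (R : rcfType) D (I : finType) (A : {set I}) (x : I -> nat) :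
  (forall i j, i \in A -> j \in A -> i != j -> x i = 0%N \/ x j = 0%N) ->
  \sum_(i in A) phi R D (x i) = phi R D (\sum_(i in A) x i)%N.
Proof.
move=> h.
case: (boolP [exists i in A, 0 < x i]%N) => [/existsP [i /andP [hi xi]] | /existsPn hn].
  have z : forall j, j \in A -> j != i -> x j = 0%N.
    move=> j hj ji; have ij : i != j by rewrite eq_sym.
    by case: (h i j hi hj ij) => [xi0|//]; rewrite xi0 in xi.
  rewrite (bigD1 i) //= [in RHS](bigD1 i) //= big1; last by move=> j /andP [hj ji]; rewrite z // phi0.
  rewrite big1 ?addn0 ?addr0 //.
  by move=> j /andP [hj ji]; rewrite z.
have z : forall j, j \in A -> x j = 0%N.
  by move=> j hj; move: (hn j); rewrite hj /= lt0n negbK => /eqP.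
rewrite big1; last by move=> j hj; rewrite z // phi0.
by rewrite big1 ?phi0 // => j hj; rewrite z.
Qed.

Definition Sgood n (e : rel 'I_n) : Prop :=
  (forall a b, a \in Qset e -> b \in Qset e -> a != b -> e a b) /\
  (forall a b, a \in Qset e -> b \in Qset e -> a != b -> xp e a = 0%N \/ xp e b = 0%N).

Lemma deg_clique n (e : rel 'I_n) : simple_graph e ->
  (forall a b, a \in Qset e -> b \in Qset e -> a != b -> e a b) ->
  forall a, a \in Qset e -> deg e a = (#|Qset e| - 1 + xp e a)%N.
Proof.
move=> sg hc a ha.
rewrite deg_split; congr (_ + _)%N.
apply/eqP; rewrite eqn_leq nbQ_le //=.
rewrite (cardsD1 a (Qset e)) ha add1n subn1 /=.
apply: subset_leq_card; apply/subsetP => b; rewrite !inE => /andP [ba hb].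
rewrite hb andbT; apply: hc => //; [by rewrite !inE | by rewrite eq_sym].
Qed.

Lemma deg_le n (e : rel 'I_n) : simple_graph e ->
  forall a, a \in Qset e -> (deg e a <= #|Qset e| - 1 + xp e a)%N.
Proof.
move=> sg a ha; rewrite deg_split leq_add2r; exact: nbQ_le.
Qed.

Lemma main_ineq (R : rcfType) n (e : rel 'I_n) : simple_graph e -> connected_graph e -> (3 <= n)%N ->
  (2 <= #|Qset e|)%N ->
  2 * sombor R e <= (#|Qset e| * (#|Qset e| - 1))%:R * W R (#|Qset e| - 1) (#|Qset e| - 1)
                    + 2 * phi R (#|Qset e| - 1) #|Pset e| /\
  (2 * sombor R e = (#|Qset e| * (#|Qset e| - 1))%:R * W R (#|Qset e| - 1) (#|Qset e| - 1)
                    + 2 * phi R (#|Qset e| - 1) #|Pset e| <-> Sgood e).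
Proof.
move=> sg cg h3 hm.
set Q := Qset e.
set D := (#|Q| - 1)%N.
set c := W R D D.
have cge : 0 <= c := W_ge0 R D D.
pose ub a b := if b == a then 0 else c + gg R D (xp e a) + gg R D (xp e b).
have hT1 : forall a b, a \in Q -> b \in Q -> Fw R e a b <= ub a b.
  move=> a b ha hb; rewrite /ub /Fw; case: eqP => [->|nab]; first by rewrite sg.2.
  case: (e a b); last by apply: addr_ge0; [apply: addr_ge0|]; rewrite ?gg_ge0.
  apply: le_trans (W_sub R D _ _); apply: W_mono; exact: deg_le.
have hT2 : forall a, a \in Q -> (xp e a)%:R * W R (deg e a) 1 <= (xp e a)%:R * W R (D + xp e a) 1.
  move=> a ha; apply: ler_wpM2l => //; apply: W_mono => //; exact: deg_le.
set T1 := \sum_(a in Q) \sum_(b in Q) Fw R e a b.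
set U1 := \sum_(a in Q) \sum_(b in Q) ub a b.
set T2 := \sum_(a in Q) (xp e a)%:R * W R (deg e a) 1.
set U2 := \sum_(a in Q) (xp e a)%:R * W R (D + xp e a) 1.
set G := \sum_(a in Q) gg R D (xp e a).
set Ph := \sum_(a in Q) phi R D (xp e a).
have e2S : 2 * sombor R e = T1 + 2 * T2 by rewrite sombor2 // split_sum.
have hU1 : U1 = (#|Q| * D)%:R * c + 2 * D%:R * G.
  rewrite /U1 /ub /D pair_sum //; exact: leq_trans hm.
have hphi : Ph = D%:R * G + U2.
  by rewrite /Ph /phi big_split /= -mulr_sumr.
have hps : Ph <= phi R D #|Pset e|.
  by rewrite /Ph -(sum_xp sg cg h3); apply: phi_sum.
have l1 : T1 <= U1.
  apply: ler_sum => a ha; apply: ler_sum => b hb; exact: hT1.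
have l2 : T2 <= U2.
  apply: ler_sum => a ha; exact: hT2.
split.
  rewrite e2S; lra.
split.
- move=> heq.
  have eT1 : T1 = U1 by lra.
  have ePh : Ph = phi R D #|Pset e| by lra.
  split.
  + move=> a b ha hb nab.
    have c0 : 0 < c.
      rewrite /c /W sqrtr_gt0 ltr0n addn_gt0 expn_gt0 /D.
      by rewrite subn_gt0 (leq_trans _ hm).
    have rows : forall a, a \in Q -> \sum_(b in Q) ub a b - \sum_(b in Q) Fw R e a b = 0.
      apply: psumr_eq0P.
        move=> a' ha'; rewrite subr_ge0; apply: ler_sum => b' hb'; exact: hT1.
      by rewrite sumrB -/U1 -/T1 eT1 subrr.
    have cols : ub a b - Fw R e a b = 0.
      move: (rows a ha); rewrite -sumrB => h.
      have nn : forall b', b' \in Q -> 0 <= ub a b' - Fw R e a b'.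
        by move=> b' hb'; rewrite subr_ge0; exact: hT1.
      exact: (@psumr_eq0P _ _ (fun i => i \in Q) (fun i => ub a i - Fw R e a i) nn h b hb).
    move: cols; rewrite /ub /Fw eq_sym (negbTE nab).
    case: (e a b) => //; rewrite subr0 => hz.
    have : 0 < c + gg R D (xp e a) + gg R D (xp e b).
      have g1 := gg_ge0 R D (xp e a); have g2 := gg_ge0 R D (xp e b); lra.
    by rewrite hz ltxx.
  + move=> a b ha hb nab.
    case: (posnP (xp e a)) => [->|xa]; first by left.
    case: (posnP (xp e b)) => [->|xb]; first by right.
    have := @phi_sum_strict R D _ Q (xp e) a b ha hb nab xa xb.
    by rewrite -/Ph (sum_xp sg cg h3) ePh ltxx.
- move=> [hcl hx].
  have dg : forall a, a \in Q -> deg e a = (D + xp e a)%N by move=> a ha; rewrite deg_clique.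
  have eT1 : T1 = U1.
    apply: eq_bigr => a ha; apply: eq_bigr => b hb.
    rewrite /ub /Fw; case: eqP => [->|/eqP nab]; first by rewrite sg.2.
    rewrite hcl // ?dg //; first by apply: W_sub_eq; rewrite eq_sym in nab; case: (hx a b ha hb _) => // ->; rewrite eqxx ?orbT.
    by rewrite eq_sym.
  have eT2 : T2 = U2.
    by apply: eq_bigr => a ha; rewrite dg.
  have ePh : Ph = phi R D #|Pset e|.
    by rewrite /Ph phi_sum_eq // (sum_xp sg cg h3).
  rewrite e2S eT1 eT2 hU1 -ePh hphi; ring.
Qed.

Lemma kite_sym n k (x y : 'I_n) : kite n k x y = kite n k y x.
Proof.
rewrite /kite eq_sym; case: (y != x) => //=.
by case: (x < n - k)%N; case: (y < n - k)%N; case: (val x == 0)%N; case: (val y == 0)%N;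
   case: (n - k <= x)%N; case: (n - k <= y)%N.
Qed.

Lemma deg_iso n (e e' : rel 'I_n) (f : 'I_n -> 'I_n) : bijective f ->
  (forall x y, e x y = e' (f x) (f y)) -> forall x, deg e x = deg e' (f x).
Proof.
move=> [g fg gf] hf x; rewrite /deg.
have -> : [set y | e' (f x) y] = f @: [set y | e x y].
  rewrite (can2_imset_pre _ fg gf); apply/setP => z; rewrite !inE hf gf //.
by rewrite card_imset //; exact: can_inj fg.
Qed.

Lemma kite_deg_big n k (z : 'I_n) : (3 <= n - k)%N -> (z < n - k)%N -> deg (kite n k) z != 1%N.
Proof.
move=> hm hz; apply/negP => /eqP h1.
have : (1 < deg (kite n k) z)%N.
  have hn : (3 <= n)%N by apply: leq_trans hm (leq_subr _ _).
  pose o (i : nat) (hi : (i < 3)%N) := Ordinal (leq_trans hi hn).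
  have ok : forall i (hi : (i < 3)%N), o i hi != z -> kite n k z (o i hi).
    move=> i hi ne; rewrite /kite eq_sym ne /= hz /=.
    by rewrite (leq_trans hi hm).
  apply/card_gt1P.
  case: (eqVneq (nat_of_ord z) 0%N) => z0.
    exists (o 1%N isT), (o 2%N isT); split; rewrite ?inE ?ok //; apply/eqP => /(congr1 val); rewrite /o /= => ?; lia.
  exists (o 0%N isT).
  case: (eqVneq (nat_of_ord z) 1%N) => z1.
    exists (o 2%N isT); split; rewrite ?inE ?ok //; apply/eqP => /(congr1 val); rewrite /o /= => ?; lia.
  exists (o 1%N isT); split; rewrite ?inE ?ok //; apply/eqP => /(congr1 val); rewrite /o /= => ?; lia.
by rewrite h1.
Qed.

Lemma kite_deg_small n k (z : 'I_n) : (3 <= n - k)%N -> (n - k <= z)%N -> deg (kite n k) z = 1%N.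
Proof.
move=> hm hz.
have hn : (0 < n)%N by lia.
rewrite /deg (_ : [set y | kite n k z y] = [set Ordinal hn]) ?cards1 //.
apply/setP => y; rewrite !inE /kite.
have zpos : (val z == 0)%N = false by apply/negbTE; rewrite -lt0n /=; lia.
rewrite zpos /= ltnNge hz /= andbT.
apply/idP/idP.
  by move=> /andP [_ y0]; apply/eqP; apply: val_inj; apply/eqP.
move=> /eqP ->; rewrite /= eqxx andbT.
by apply/eqP => /(congr1 val) /= h; move/negbT: zpos; rewrite /= h.
Qed.

Lemma iso_Sgood n k (e : rel 'I_n) : (3 <= n - k)%N -> isomorphic e (kite n k) -> Sgood e.
Proof.
move=> hm [f [fb hf]].
have finj := bij_inj fb.
have hP : forall x, (x \in Qset e) = (f x < n - k)%N.
  move=> x; rewrite !inE (deg_iso fb hf); case: (ltnP (f x) (n - k)) => h.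
    by rewrite (kite_deg_big hm h).
  by rewrite (kite_deg_small hm h).
have hx : forall a, a \in Qset e -> (val (f a) != 0)%N -> xp e a = 0%N.
  move=> a ha fa0; apply/eqP; rewrite cards_eq0; apply/eqP/setP => p; rewrite !inE.
  apply/negbTE; apply/negP => /andP [eap dp].
  have pP : (n - k <= f p)%N by rewrite leqNgt -hP !inE dp.
  move: eap; rewrite hf /kite; rewrite hP in ha.
  have h1 : (f p < n - k)%N = false by rewrite ltnNge pP.
  have h2 : (n - k <= f a)%N = false by rewrite leqNgt ha.
  by rewrite h1 h2 (negbTE fa0) !andbF.
split.
- move=> a b ha hb nab; rewrite hf /kite.
  rewrite hP in ha; rewrite hP in hb; rewrite ha hb /= andbT.
  by apply/eqP => h; move/eqP: nab; apply; apply: finj.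
- move=> a b ha hb nab.
  case: (eqVneq (val (f a)) 0%N) => fa0.
    right; apply: hx => //; apply/eqP => fb0.
    move/eqP: nab; apply; apply: finj; apply: val_inj; by rewrite fa0 fb0.
  by left; apply: hx.
Qed.

Lemma Sgood_iso n k (e : rel 'I_n) : simple_graph e -> connected_graph e -> (3 <= n)%N ->
  #|Pset e| = k -> (3 <= n - k)%N -> Sgood e -> isomorphic e (kite n k).
Proof.
move=> sg cg h3 hk hm [hcl hxx].
have hQ : #|Qset e| = (n - k)%N by rewrite card_Q hk.
have [h [hQh hz]] : exists h, h \in Qset e /\ forall a, a \in Qset e -> a != h -> xp e a = 0%N.
  case: (pickP (fun a => (a \in Qset e) && (0 < xp e a)%N)) => [h0 /andP [hh xh] | none].
    exists h0; split => // a ha ah.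
    case: (hxx h0 a hh ha); first by rewrite eq_sym.
      by move=> x0; rewrite x0 in xh.
    by [].
  have : (0 < #|Qset e|)%N by rewrite hQ; lia.
  move=> /card_gt0P [h0 hh]; exists h0; split => // a ha _.
  by move: (none a); rewrite ha /= => /negbT; rewrite -leqNgt leqn0 => /eqP.
have pnb : forall p, p \in Pset e -> forall y, e p y = (y == h).
  move=> p hp y.
  have [h' [hN hQ']] := pend_nb sg cg h3 hp.
  have h'h : h' = h.
    apply/eqP; apply/negP => /negP nh.
    have := hz h' hQ' nh; move/eqP; rewrite cards_eq0 => /eqP /setP /(_ p).
    have dp : deg e p == 1%N by move: hp; rewrite inE.
    rewrite !inE dp andbT.
    have : h' \in Nb e p by rewrite hN set11.
    by rewrite inE sg.1 => ->.
  have : (y \in Nb e p) = (y == h) by rewrite hN inE h'h.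
  by rewrite inE.
set L := h :: (enum (Qset e :\ h) ++ enum (Pset e)).
have memL : forall x, x \in L.
  move=> x; rewrite inE mem_cat !mem_enum !inE.
  by case: (x == h) => //=; case: (deg e x == 1%N).
have sizeL : size L = n.
  rewrite /= size_cat -!cardE hk.
  have := cardsD1 h (Qset e); rewrite hQh hQ /=.
  move: hm; lia.
have hlt : forall x, (index x L < n)%N by move=> x; rewrite -{2}sizeL index_mem memL.
pose f x := Ordinal (hlt x).
have finj : injective f.
  move=> x y /(congr1 val) hi0.
  have hi : index x L = index y L := hi0.
  by rewrite -(nth_index h (memL x)) hi nth_index.
have fb := injF_bij finj.
have f0 : forall x, (val (f x) == 0%N) = (x == h).
  move=> x; rewrite /= /L /= [x == h]eq_sym; by case: (h == x).
have fQ : forall x, x \in Qset e -> (f x < n - k)%N.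
  move=> x hx; rewrite /= /L /=.
  case: eqP => [_|/eqP xh]; first by lia.
  have : x \in Qset e :\ h by rewrite in_setD1 hx andbT eq_sym.
  move=> hxx'; rewrite index_cat mem_enum hxx'.
  have : (index x (enum (Qset e :\ h)) < size (enum (Qset e :\ h)))%N by rewrite index_mem mem_enum.
  rewrite -cardE.
  have := cardsD1 h (Qset e); rewrite hQh hQ /=.
  lia.
have fP : forall x, x \in Pset e -> (n - k <= f x)%N.
  move=> x hx; rewrite /= /L /=.
  have xh : (h == x) = false.
    by apply/negbTE; apply/eqP => hx0; subst x; move: hQh; rewrite inE hx.
  rewrite xh index_cat mem_enum !inE.
  have -> : (deg e x == 1%N) = true by move: hx; rewrite inE.
  rewrite andbF -cardE.
  have := cardsD1 h (Qset e); rewrite hQh hQ /=.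
  lia.
have inQP : forall x, (x \in Qset e) || (x \in Pset e).
  by move=> x; rewrite !inE; case: (deg e x == 1%N).
have caseQP : forall x y, x \in Qset e -> y \in Pset e -> e x y = kite n k (f x) (f y).
  move=> x y hx hy.
  rewrite sg.1 (pnb y hy) /kite (inj_eq finj).
  have -> : (x != y) = true.
    apply/negP => /eqP xy; subst y; move: hx; rewrite inE hy.
    by [].
  have -> : (f y < n - k)%N = false by rewrite ltnNge fP.
  have -> : (n - k <= f x)%N = false by rewrite leqNgt fQ.
  by rewrite f0 (fP y hy) /= !andbF !orbF andbT.
exists f; split => // x y.
have := inQP x; have := inQP y.
case/orP => hy; case/orP => hx.
- rewrite /kite (inj_eq finj) (fQ x hx) (fQ y hy) /=.
  case: eqVneq => [-> | nxy]; first by rewrite sg.2.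
  by apply: hcl.
- by rewrite sg.1 kite_sym; apply: caseQP.
- by apply: caseQP.
- rewrite (PP_nonadj sg cg h3 hx hy) /kite.
  have -> : (f x < n - k)%N = false by rewrite ltnNge fP.
  have -> : (val (f x) == 0%N) = false by rewrite f0; apply/negbTE/eqP => xh; subst x; move: hQh; rewrite inE hx.
  have -> : (val (f y) == 0%N) = false by rewrite f0; apply/negbTE/eqP => xh; subst y; move: hQh; rewrite inE hy.
  by rewrite !andbF.
Qed.

Lemma WDD (R : rcfType) D : W R D D = Num.sqrt 2 * D%:R.
Proof.
rewrite WE -mulr2n -(mulr_natl (D%:R ^+ 2) 2) sqrtrM ?ler0n // sqrtr_sqr ger0_norm //.
Qed.

Unset Implicit Arguments.

Theorem theorem3p6 (R : rcfType) (n k : nat) (e : rel 'I_n) :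
  (3 <= n)%N -> (k <= n - 3)%N ->
  simple_graph e -> connected_graph e -> num_pendent e = k ->
  sombor R e <=
    ((n - k - 2) * (n - k - 1) ^ 2)%N%:R / Num.sqrt 2
    + (k%:R : R) * Num.sqrt (((n - 1) ^ 2 + 1)%N%:R)
    + (n - k - 1)%N%:R * Num.sqrt (((n - 1) ^ 2 + (n - k - 1) ^ 2)%N%:R)
  /\
  (sombor R e =
    ((n - k - 2) * (n - k - 1) ^ 2)%N%:R / Num.sqrt 2
    + (k%:R : R) * Num.sqrt (((n - 1) ^ 2 + 1)%N%:R)
    + (n - k - 1)%N%:R * Num.sqrt (((n - 1) ^ 2 + (n - k - 1) ^ 2)%N%:R)
   <-> isomorphic e (kite n k)).
Proof.
move=> h3 hk sg cg hp.
have hP : #|Pset e| = k := hp.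
have hQ : #|Qset e| = (n - k)%N by rewrite card_Q hP.
have hm2 : (2 <= #|Qset e|)%N by rewrite hQ; lia.
have hm3 : (3 <= n - k)%N by lia.
have [le eqv] := main_ineq R sg cg h3 hm2.
rewrite hQ hP in le eqv.
have key : ((n - k - 2) * (n - k - 1) ^ 2)%N%:R / Num.sqrt 2
    + (k%:R : R) * Num.sqrt (((n - 1) ^ 2 + 1)%N%:R)
    + (n - k - 1)%N%:R * Num.sqrt (((n - 1) ^ 2 + (n - k - 1) ^ 2)%N%:R)
  = (((n - k) * (n - k - 1))%N%:R * W R (n - k - 1) (n - k - 1)
                    + 2 * phi R (n - k - 1) k) / 2.
  set D := (n - k - 1)%N.
  have eD2 : (n - k - 2)%N = (D - 1)%N by rewrite /D; lia.
  have en1 : (n - 1)%N = (D + k)%N by rewrite /D; lia.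
  have enk : (n - k)%N = (D + 1)%N by rewrite /D; lia.
  have D1 : (1 <= D)%N by rewrite /D; lia.
  rewrite eD2 en1 enk WDD /phi /gg WDD.
  have -> : Num.sqrt (((D + k) ^ 2 + 1)%N%:R) = W R (D + k) 1 by rewrite /W exp1n.
  have -> : Num.sqrt (((D + k) ^ 2 + D ^ 2)%N%:R) = W R (D + k) D by [].
  set s := Num.sqrt (2 : R).
  have s0 : 0 < s by rewrite sqrtr_gt0 ltr0n.
  have ss : s * s = 2 by rewrite -expr2 sqr_sqrtr ?ler0n.
  have inv : s^-1 = s / 2.
    apply: (mulIf (lt0r_neq0 s0)); rewrite mulVf ?(lt0r_neq0 s0) // mulrAC ss divff //.
    by rewrite pnatr_eq0.
  rewrite natrM natrB // natrX natrM natrD.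
  rewrite inv.
  by field.
split.
  rewrite key; set Z := (_ + _) in le *; lra.
rewrite key; set Z := (_ + _) in le eqv *.
split.
  move=> heq.
  apply: (Sgood_iso sg cg h3 hP hm3); apply/eqv; lra.
move=> iso; have := iso_Sgood hm3 iso; move/eqv => h2; lra.
Qed.
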